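(* For every positive integer $n$, the difference graph of the cyclic group $\mathbb{Z}_n$ equals the difference graph of the dihedral group $D_{2n}$ of order $2n$, where $\mathbb{Z}_n$ is identified with the cyclic subgroup of rotations of index $2$ in $D_{2n}$.
   Context: For a finite group $G$ with identity $e$: the intersection power graph $\mathcal{G}_I(G)$ has vertex set $G$, two distinct non-identity vertices $x,y$ being adjacent iff $\langle x\rangle\cap\langle y\rangle\neq\{e\}$, and $e$ being adjacent to every other vertex. The power graph $\mathcal{P}(G)$ has vertex set $G$, two distinct vertices being adjacent iff one is a power of the other. The difference graph $\mathcal{D}(G)$ is the graph on vertex set $G$ with edge set $E(\mathcal{G}_I(G))\setminus E(\mathcal{P}(G))$, with all isolated vertices removed. *)

(* Defs.v *)
From mathcomp Require Import all_boot all_fingroup.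
Set Implicit Arguments.
Unset Strict Implicit.
Unset Printing Implicit Defensive.
Local Open Scope group_scope.

Section Graphs.
Variable gT : finGroupType.
Implicit Types (x y : gT) (G : {set gT}).

Definition ipg_adj x y : bool :=
  (x != y) && [|| x == 1, y == 1 | <[x]> :&: <[y]> != 1].

Definition pg_adj x y : bool :=
  (x != y) && ((x \in <[y]>) || (y \in <[x]>)).

Definition diff_adj G x y : bool :=
  [&& x \in G, y \in G, ipg_adj x y & ~~ pg_adj x y].

(* the difference graph D(G): non-isolated vertices, and its edge set
   (stored as ordered pairs, symmetric) *)
Definition diff_vertices G : {set gT} :=
  [set x in G | [exists y, diff_adj G x y]].

Definition diff_edges G : {set gT * gT} :=
  [set p | diff_adj G p.1 p.2].

Definition diff_graph G : {set gT} * {set gT * gT} :=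
  (diff_vertices G, diff_edges G).
End Graphs.

(* Main.v *)
Require Import Defs.
From mathcomp Require Import all_boot all_fingroup.
From mathcomp Require Import cyclic.
Local Open Scope group_scope.

Lemma prime_noD (gT : finGroupType) (x y : gT) :
  prime #[x] ->
  ~~ (ipg_adj x y && ~~ pg_adj x y) /\ ~~ (ipg_adj y x && ~~ pg_adj y x).
Proof.
move=> px.
have x1 : x != 1 by rewrite -order_eq1; apply/eqP=> e; rewrite e in px.
have meet : forall z : gT, <[x]> :&: <[z]> != 1 -> x \in <[z]>.
  by move=> z nt; rewrite -cycle_subG; apply: prime_meetG.
have [->|y1] := eqVneq y 1.
  by rewrite /ipg_adj /pg_adj !group1 !orbT !andbT; split; case: (_ != _); rewrite ?andbF.
have M2 : (<[y]> :&: <[x]> != 1) = (<[x]> :&: <[y]> != 1) by rewrite setIC.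
case M: (<[x]> :&: <[y]> != 1).
  by rewrite /ipg_adj /pg_adj M2 M (meet _ M) !orbT !andbT; split; case: (_ != _); rewrite ?andbF.
by rewrite /ipg_adj /pg_adj M2 M (negbTE x1) (negbTE y1) /= !andbF; split.
Qed.

Theorem lemma8p1 (gT : finGroupType) (n : nat) (G : {group gT}) (r t : gT) :
  0 < n ->
  #[r] = n -> #[t] = 2 -> t \notin <[r]> -> r ^ t = r^-1 ->
  G = (<[r]> <*> <[t]>)%G ->
  diff_graph <[r]> = diff_graph G.
Proof.
move=> _ _ ot tr rt EG.
have nrt : <[t]> \subset 'N(<[r]>).
  by rewrite cycle_subG inE -cycleJ rt cycleV.
have EG' : (G : {set gT}) = <[r]> * <[t]> by rewrite EG /= norm_joinEr.
have sRG : <[r]> \subset G by rewrite EG' mulG_subl.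
have refl : forall x, x \in G -> x \notin <[r]> -> prime #[x].
  move=> x; rewrite EG' => /mulsgP [a b Ha Hb ->] nab.
  case/cycleP: Hb => i Ei; subst b.
  rewrite -expg_mod_order ot in nab *.
  have : i %% 2 < 2 by rewrite ltn_mod.
  case: (i %% 2) nab => [|[|//]] /=.
    by rewrite expg0 mulg1 Ha.
  move=> nab _; rewrite expg1 in nab *.
  case/cycleP: Ha nab => j ->{a} nab.
  have t2 : t * t = 1 by rewrite -(expg_order t) ot expgS expg1.
  have tV : t^-1 = t by rewrite -[t^-1]mulg1 -t2 mulgA mulVg mul1g.
  have sq : (r ^+ j * t) ^+ 2 = 1.
    rewrite expgS expg1 -mulgA [t * _]mulgA.
    rewrite -{1}tV -mulgA.
    have -> : t^-1 * (r ^+ j * t) = (r ^+ j) ^ t by rewrite /conjg mulgA.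
    by rewrite conjXg rt expgVn mulgV.
  have ne1 : r ^+ j * t != 1.
    apply/eqP=> e; move: tr.
    have : t = (r ^+ j)^-1 by rewrite -[t]mul1g -(mulVg (r ^+ j)) -mulgA e mulg1.
    by move=> ->; rewrite groupV mem_cycle.
  have : #[r ^+ j * t] %| 2 by rewrite order_dvdn sq.
  rewrite dvdn_divisors // inE /=.
  case/orP => /eqP e //.
    by move: ne1; rewrite -order_eq1 e.
  by move: e; rewrite inE => /eqP /eqP ->.
have key : forall x y, diff_adj <[r]> x y = diff_adj G x y.
  move=> x y; rewrite /diff_adj.
  case Hx: (x \in <[r]>); case Hy: (y \in <[r]>) => /=.
  - by rewrite (subsetP sRG x Hx) (subsetP sRG y Hy).
  - case Gx: (x \in G) => //; case Gy: (y \in G) => //=.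
    by have [_ /negbTE] := @prime_noD _ y x (refl y Gy (negbT Hy)).
  - case Gx: (x \in G) => //; case Gy: (y \in G) => //=.
    by have [/negbTE] := @prime_noD _ x y (refl x Gx (negbT Hx)).
  - case Gx: (x \in G) => //; case Gy: (y \in G) => //=.
    by have [/negbTE] := @prime_noD _ x y (refl x Gx (negbT Hx)).
rewrite /diff_graph /diff_vertices /diff_edges; congr pair; apply/setP => p.
  rewrite !inE; under eq_existsb => y do rewrite key.
  case Ex: [exists y, _]; rewrite ?andbF ?andbT //.
  case/existsP: Ex => y; rewrite -key => /and3P [Hp _ _].
  by rewrite Hp (subsetP sRG p Hp).
by rewrite !inE key.
Qed.
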